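(* In the variety $\mathcal V$, the ternary term $p(x,y,z):=\Big(x\wedge\big((z\wedge y)\vee y'\big)\Big)\vee\Big(z\wedge\big((x\wedge y)\vee y'\big)\Big)$ satisfies the identities $p(x,x,z)\approx z$ and $p(x,z,z)\approx x$. Moreover, putting $u:=(x\wedge y)\vee(x\vee y)'$, for every $\mathbf L\in\mathcal V$ and all $x,y,z\in L$ we have: $u\wedge z=z$ and $u'\vee z=z$ if and only if $x=y$.
   Context: $\mathcal V$ is the variety of algebras $(L,\vee,\wedge,{}',0,1)$ that are bounded lattices with a complementation $'$ (i.e. $x\vee x'\approx1$, $x\wedge x'\approx0$) satisfying the identities $x\vee y'\approx y'\vee\big((x\vee y')\wedge y\big)$ and $x\wedge y\approx x\wedge\big((x\wedge y)\vee x'\big)$. *)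

(* Defs.v *)
From mathcomp Require Import all_boot all_order.
Import Order.TTheory.
Local Open Scope order_scope.

(* An algebra (L, join, meet, ', 0, 1) of the variety V: L is a bounded
   lattice (mathcomp tbLatticeType, 0 = \bot, 1 = \top) and c is the unary
   operation ' , required to be a complementation and to satisfy the two
   defining identities of V. *)
Definition inV {d : Order.disp_t} {L : tbLatticeType d} (c : L -> L) : Prop :=
  [/\ (forall x : L, x `|` c x = \top),
      (forall x : L, x `&` c x = \bot),
      (forall x y : L, x `|` c y = c y `|` ((x `|` c y) `&` y)) &
      (forall x y : L, x `&` y = x `&` ((x `&` y) `|` c x))].

Definition pterm {d : Order.disp_t} {L : tbLatticeType d} (c : L -> L)
  (x y z : L) : L :=
  (x `&` ((z `&` y) `|` c y)) `|` (z `&` ((x `&` y) `|` c y)).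

Definition uterm {d : Order.disp_t} {L : tbLatticeType d} (c : L -> L)
  (x y : L) : L :=
  (x `&` y) `|` c (x `|` y).

(* Main.v *)
Require Import Defs.
From mathcomp Require Import all_boot all_order.
Import Order.TTheory.
Local Open Scope order_scope.

Theorem mainTheorem6 (d : Order.disp_t) (L : tbLatticeType d) (c : L -> L)
  (HV : inV c) :
  (forall x z : L, pterm c x x z = z) /\
  (forall x z : L, pterm c x z z = x) /\
  (forall x y z : L,
     (uterm c x y `&` z = z /\ c (uterm c x y) `|` z = z) <-> x = y).
Proof.
case: HV => H1 H2 H3 H4.
split; [|split].
- move=> x z; rewrite /pterm meetxx H1 meetx1 [z `&` x]meetC -H4.
  by apply: join_r; apply: leIr.
- move=> x z; rewrite /pterm meetxx H1 meetx1 [x `&` z]meetC -H4.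
  by apply: join_l; apply: leIr.
- move=> x y z; split.
  + case=> Hz Hc.
    set u := uterm c x y.
    have zu : z <= u by rewrite -Hz leIl.
    have cuz : c u <= z by rewrite -Hc leUl.
    have cuu : c u <= u := le_trans cuz zu.
    have cu0 : c u = \bot by rewrite -(H2 u) meetC (meet_l cuu).
    have u1 : u = \top by rewrite -(H1 u) cu0 joinx0.
    have e : x `&` y = x `|` y.
      have := H4 (x `|` y) (x `&` y).
      have -> : (x `|` y) `&` (x `&` y) = x `&` y.
        by rewrite meetC; apply: meet_l; apply: le_trans (leIl _ _) (leUl _ _).
      rewrite -/(uterm c x y) -/u u1 meetx1 => ->; by [].
    apply: le_anti; apply/andP; split.
    * by apply: (le_trans (leUl x y)); rewrite -e leIr.
    * by apply: (le_trans (leUr y x)); rewrite -e leIl.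
  + move=> <-; rewrite /uterm meetxx joinxx H1.
    have c1 : c \top = \bot by rewrite -(H2 \top) meet1x.
    by rewrite meet1x c1 join0x.
Qed.
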